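(* Let $A$ be a rational $m\times n$ matrix of full row rank with $m\geq 2$, and let $r=A_i$ be a row of $A$ all of whose entries lie in $\{0,1,-1\}$. Then $A$ is equimodular if and only if the trim $A/\!\!/(i,j)$ is equimodular for every $j\in\operatorname{supp}(r)$.
   Context: An $m\times n$ matrix is equimodular if it has full row rank $m$ and all its nonzero $m\times m$ minors have the same absolute value. $\operatorname{supp}(x)$ is the set of indices of nonzero coordinates of $x$. For a position $p=(i,j)$ with $A_i^j\neq0$, the pivot $A/p$ is obtained from $A$ by dividing row $i$ by $A_i^j$ and adding suitable multiples of this new row to the other rows so that column $j$ becomes the $i$-th unit vector; the trim $A/\!\!/p$ is obtained from $A/p$ by deleting row $i$ and column $j$. *)

(* Defs.v *)
From HB Require Import structures.
From mathcomp Require Import all_boot all_order all_algebra.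
Set Implicit Arguments. Unset Strict Implicit. Unset Printing Implicit Defensive.
Import Order.TTheory GRing.Theory Num.Theory.
Local Open Scope ring_scope.

(* The m x m minor of A : 'M_(m,n) on the columns selected by f : 'I_m -> 'I_n.
   (Non-injective f give 0; up to sign, every m x m minor arises this way.) *)
Definition minor (F : comNzRingType) (m n : nat) (A : 'M[F]_(m, n))
  (f : 'I_m -> 'I_n) : F := \det (colsub f A).

Definition equimodular (m n : nat) (A : 'M[rat]_(m, n)) : Prop :=
  \rank A = m /\
  forall f g : 'I_m -> 'I_n, minor A f != 0 -> minor A g != 0 ->
    `|minor A f| = `|minor A g|.

Definition pivot (F : fieldType) (m n : nat) (A : 'M[F]_(m, n))
  (i : 'I_m) (j : 'I_n) : 'M[F]_(m, n) :=
  \matrix_(k, l) (if k == i then A i l / A i j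
                  else A k l - A k j * (A i l / A i j)).

Definition trim (F : fieldType) (m n : nat) (A : 'M[F]_(m, n))
  (i : 'I_m) (j : 'I_n) : 'M[F]_(m.-1, n.-1) :=
  row' i (col' j (pivot A i j)).

(* Main.v *)
Require Import Defs.
From HB Require Import structures.
From mathcomp Require Import all_boot all_order all_algebra.
From mathcomp Require Import ring.
Import Order.TTheory GRing.Theory Num.Theory.
Local Open Scope ring_scope.

Lemma zero_col (p : nat) (N : 'M[rat]_p) b :
  (forall l, N l b = 0) -> \det N = 0.
Proof. by move=> H; rewrite (expand_det_col _ b) big1 // => l _; rewrite H mul0r. Qed.

Lemma delta_col p (N : 'M[rat]_p) i k : (forall l, N l k = (l == i)%:R) ->
  \det N = (-1)^+(i+k) * \det (row' i (col' k N)).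
Proof.
move=> H; rewrite (expand_det_col _ k) (bigD1 i) //= big1 ?addr0.
  by rewrite H eqxx mul1r.
by move=> l /negPf hl; rewrite H hl mul0r.
Qed.

Lemma sign_ii p (i : 'I_p) : (-1) ^+ (i + i) = 1 :> rat.
Proof. by rewrite -signr_odd oddD addbb expr0. Qed.

Lemma exists_minor p q (B : 'M[rat]_(p,q)) : \rank B = p ->
  exists g : 'I_p -> 'I_q, \det (colsub g B) != 0.
Proof.
move=> rB; have fA : row_full B^T by rewrite /row_full mxrank_tr rB.
exists (fullrankfun fA); have := fullrowsub_unit fA.
by rewrite -[rowsub _ _]trmx_mxsub unitmxE det_tr unitfE.
Qed.

Lemma rank_minor p q (B : 'M[rat]_(p,q)) g : \det (colsub g B) != 0 -> \rank B = p.
Proof.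
move=> H; apply/eqP; rewrite eqn_leq rank_leq_row /=.
have h : \rank (colsub g B) = p by apply: mxrank_unit; rewrite unitmxE unitfE.
by move: (mxrankM_maxl B (colsub g 1%:M)); rewrite mulmx_colsub mulmx1 h.
Qed.

Lemma sum_neq0 p (F : 'I_p -> rat) : \sum_k F k != 0 -> exists k, F k != 0.
Proof.
move=> H; case: (boolP [exists k, F k != 0]) => [/existsP//|/existsPn Hn].
by case/eqP: H; rewrite big1 // => k _; apply/eqP; move: (Hn k); rewrite negbK.
Qed.

Lemma liftF p (h : 'I_p) x : (lift h x == h) = false.
Proof. by apply/negbTE; rewrite eq_sym neq_lift. Qed.


Lemma pivot_col (m n : nat) (A : 'M[rat]_(m, n)) (i : 'I_m) (j : 'I_n) (Ha : A i j != 0) k : pivot A i j k j = (k == i)%:R.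
Proof.
rewrite mxE; case: (k == i); first by rewrite divff.
by rewrite divff // mulr1 subrr.
Qed.

Lemma pivot_minor (m n : nat) (A : 'M[rat]_(m, n)) (i : 'I_m) (j : 'I_n) (Ha : A i j != 0) f : minor (pivot A i j) f = (A i j)^-1 * minor A f.
Proof.
pose w k := if k == i then (A i j)^-1 - 1 else - (A k j / A i j).
pose E : 'M[rat]_m := 1%:M + \matrix_(k, l) ((l == i)%:R * w k).
have eqE : colsub f (pivot A i j) = E *m colsub f A.
  apply/matrixP => k c; rewrite mulmxDl mul1mx !mxE.
  rewrite (bigD1 i) //= big1 ?addr0; last first.
    by move=> l /negPf hl; rewrite !mxE hl mul0r mul0r.
  rewrite !mxE eqxx mul1r /w.
  have [->|/negPf hk] := eqVneq k i; rewrite ?eqxx ?hk; by field.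
have dE : \det E = (A i j)^-1.
  rewrite (expand_det_col _ i) (bigD1 i) //= big1 ?addr0.
    rewrite /cofactor sign_ii mul1r.
    have -> : row' i (col' i E) = 1%:M.
      apply/matrixP => a b; rewrite !mxE (inj_eq (@lift_inj _ i)).
      by rewrite liftF mul0r addr0.
    by rewrite det1 mulr1 !mxE /w; case: eqP => // _; rewrite mul1r addrC subrK.
  move=> k hk; rewrite /cofactor.
  case: (unliftP i k) => [b0 Hk|Hk]; last by rewrite Hk eqxx in hk.
  rewrite (@zero_col _ _ b0) ?mulr0 // => a.
  rewrite !mxE -Hk liftF.
  by rewrite (negbTE hk) !mul0r addr0.
by rewrite /minor eqE det_mulmx dE.
Qed.

Lemma rc_colsub (m n : nat) (A : 'M[rat]_(m, n)) (i : 'I_m) (j : 'I_n) p (f : 'I_p -> 'I_n) (k : 'I_p) (i0 : 'I_m) :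
  row' i0 (col' k (colsub f (pivot A i j))) = colsub (f \o lift k) (row' i0 (pivot A i j)).
Proof. by apply/matrixP => a b; rewrite !mxE. Qed.

Lemma cof_trim (m n : nat) (A : 'M[rat]_(m, n)) (i : 'I_m) (j : 'I_n) (Ha : A i j != 0) (f : 'I_m -> 'I_n) k :
  \det (row' i (col' k (colsub f (pivot A i j)))) != 0 ->
  exists g, \det (row' i (col' k (colsub f (pivot A i j)))) = minor (trim A i j) g.
Proof.
move=> H.
have Hl : forall l, exists y, f (lift k l) = lift j y.
  move=> l; case: (unliftP j (f (lift k l))) => [y ->|Heq]; first by exists y.
  case/eqP: H; apply: (@zero_col _ _ l) => a.
  by rewrite !mxE Heq liftF divff // mulr1 subrr.
have [g Hg] := fin_all_exists Hl.
exists g; rewrite /minor /trim; congr (\det _); apply/matrixP => a b.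
by rewrite !mxE Hg.
Qed.

Lemma trim_to_A (m n : nat) (A : 'M[rat]_(m, n)) (i : 'I_m) (j : 'I_n) (Ha : A i j != 0) (g : 'I_m.-1 -> 'I_n.-1) :
  exists f, minor (trim A i j) g = minor (pivot A i j) f.
Proof.
pose f k := if unlift i k is Some l then lift j (g l) else j.
exists f; rewrite /minor (@delta_col _ _ i i); last first.
  by move=> l; rewrite !mxE /f unlift_none -(@pivot_col _ _ A i j Ha) mxE.
rewrite sign_ii mul1r rc_colsub /trim; congr (\det _); apply/matrixP => a b.
by rewrite !mxE /f /= liftK.
Qed.



Lemma row_exists (m : nat) (M : 'M[rat]_m) (i : 'I_m) : \det M != 0 ->
  exists k, M i k * cofactor M i k != 0.
Proof. by rewrite (expand_det_row _ i) => /sum_neq0. Qed.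

Theorem mainTheorem3 (m n : nat) (A : 'M[rat]_(m, n)) (i : 'I_m) :
  (2 <= m)%N ->
  \rank A = m ->
  (forall l : 'I_n, A i l \in [:: 0; 1; -1]) ->
  equimodular A <-> (forall j : 'I_n, A i j != 0 -> equimodular (trim A i j)).
Proof.
move=> _ rA Hrow.
have Hint : forall l, A i l \is a Num.int.
  move=> l; move: (Hrow l); rewrite !inE => /orP[/eqP->|/orP[/eqP->|/eqP->]].
  - exact: rpred0.
  - exact: rpred1.
  - by rewrite rpredN rpred1.
have Hnorm : forall l, A i l != 0 -> `|(A i l)^-1| = 1.
  move=> l; move: (Hrow l); rewrite !inE => /orP[/eqP->|/orP[/eqP->|/eqP->]].
  - by rewrite eqxx.
  - by rewrite invr1 normr1.
  - by rewrite invrN invr1 normrN normr1.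
have Hinv : forall l, A i l != 0 -> (A i l)^-1 \is a Num.int.
  move=> l; move: (Hrow l); rewrite !inE => /orP[/eqP->|/orP[/eqP->|/eqP->]].
  - by rewrite eqxx.
  - by rewrite invr1 rpred1.
  - by rewrite invrN invr1 rpredN rpred1.
have Pnorm : forall j f, A i j != 0 -> `|minor (pivot A i j) f| = `|minor A f|.
  by move=> j f hj; rewrite pivot_minor // normrM Hnorm // mul1r.
split.
- case=> _ Heq j hj; split.
  + have [f hf] := @exists_minor _ _ _ rA.
    have hP : \det (colsub f (pivot A i j)) != 0.
      by move: hf; rewrite -!/(minor _ _) pivot_minor // mulf_eq0 invr_eq0 negb_or (negbTE hj).
    have [k hk] := row_exists _ _ i hP.
    have hc : \det (row' i (col' k (colsub f (pivot A i j)))) != 0.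
      by apply: contraNneq hk; rewrite /cofactor => ->; rewrite !mulr0.
    have [g hg] := @cof_trim _ _ _ _ _ hj _ _ hc.
    by apply: (@rank_minor _ _ _ g); rewrite -/(minor _ _) -hg.
  + move=> g1 g2 h1 h2.
    have [f1 e1] := trim_to_A _ _ A i j hj g1.
    have [f2 e2] := trim_to_A _ _ A i j hj g2.
    rewrite e1 e2 !Pnorm //; apply: Heq.
    * by move: h1; rewrite e1 pivot_minor // mulf_eq0 negb_or => /andP[].
    * by move: h2; rewrite e2 pivot_minor // mulf_eq0 negb_or => /andP[].
- move=> H; split => //.
  suff key : forall f g, minor A f != 0 -> minor A g != 0 -> `|minor A f| <= `|minor A g|.
    by move=> f g hf hg; apply/eqP; rewrite eq_le !key.
  move=> f g hf hg.
  have [k0 hk0] := row_exists _ _ i hf.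
  have hj : A i (f k0) != 0.
    by apply: contraNneq hk0; rewrite mxE => ->; rewrite mul0r.
  set j := f k0 in hj.
  have [_ HeqT] := H j hj.
  have dcol : forall (h : 'I_m -> 'I_n) k, h k = j -> forall l,
      colsub h (pivot A i j) l k = (l == i)%:R.
    by move=> h k hk l; rewrite mxE hk (@pivot_col _ _ A i j hj).
  have ef := @delta_col _ _ i k0 (dcol f k0 erefl).
  have hPf : \det (colsub f (pivot A i j)) != 0.
    by rewrite -/(minor _ _) pivot_minor // mulf_neq0 // invr_eq0.
  have hc : \det (row' i (col' k0 (colsub f (pivot A i j)))) != 0.
    by apply: contraNneq hPf; rewrite ef => ->; rewrite mulr0.
  have [g0 hg0] := @cof_trim _ _ _ _ _ hj _ _ hc.
  set c := `|minor (trim A i j) g0|.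
  have hg0n : minor (trim A i j) g0 != 0 by rewrite -hg0.
  have cpos : 0 < c by rewrite normr_gt0.
  have cf : `|minor A f| = c.
    by rewrite -(Pnorm j) // /minor ef normrM normr_sign mul1r hg0.
  rewrite cf -(Pnorm j) //.
  have hPg : \det (colsub g (pivot A i j)) != 0.
    by rewrite -/(minor _ _) pivot_minor // mulf_neq0 // invr_eq0.
  set Mg := colsub g (pivot A i j) in hPg *.
  have zint : \det Mg / c \is a Num.int.
    rewrite (expand_det_row _ i) mulr_suml; apply: rpred_sum => k _.
    rewrite /cofactor.
    have -> : forall x y z w : rat, x * (y * z) / w = (x * y) * (z / w).
      by move=> x y z w; rewrite !mulrA.
    apply: rpredM.
      rewrite /Mg !mxE eqxx; apply: rpredM; first by apply: rpredM; [apply: Hint | apply: Hinv].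
      by rewrite -signr_odd; case: odd => /=; rewrite ?expr1 ?expr0 ?rpredN rpred1.
    set d := \det _.
    have [->|hd] := eqVneq d 0; first by rewrite mul0r rpred0.
    have [g' hg'] := @cof_trim _ _ _ _ _ hj _ _ hd.
    have dc : `|d| = c by rewrite /d hg'; apply: HeqT => //; rewrite -hg'.
    rewrite -dc; have [hd0|hd0] := lerP 0 d.
      by rewrite ger0_norm // divff // rpred1.
    by rewrite ltr0_norm // invrN mulrN divff // rpredN rpred1.
  have z0 : \det Mg / c != 0 by rewrite mulf_neq0 // invr_eq0 gt_eqF.
  have := norm_intr_ge1 zint z0.
  rewrite normrM normfV (gtr0_norm cpos) ler_pdivlMr // mul1r.
  by rewrite /minor.
Qed.
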